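(* Let $s\in(0,1)$ and suppose the jump kernels $j_1^{(n)}$ satisfy the upper bound with this $s$. Then for every $u\in\operatorname{Lip}([0,1])$, $\widetilde{\mathcal{E}}_1^{(\infty)}(u)=\mathcal{E}_1^{(\infty)}(u)$.
   Context: Index graph: vertices $\mathbb{N}$; vertex $i$ has edges $e_{i,2i-2}$ to $2i-2$ (only if $i\ge2$), $e_{i,2i-1},e'_{i,2i-1}$ to $2i-1$, $e_{i,2i}$ to $2i$, weights $r_e>0$ with $r_{e_{i,2i-1}}=r_{e'_{i,2i-1}}$. For $e$ from $i$ to $j$, $\phi_e(x)=\frac{j}{2i}x+s_e$, $s_e=0$ for $e\in\{e_{i,2i-1},e_{i,2i}\}$, $s_e=\frac1{2i}$ for $e\in\{e_{i,2i-2},e'_{i,2i-1}\}$. $E_1^{(n)}$: paths $\sigma=e_1\cdots e_n$ of length $n$ from vertex $1$; $\phi_\sigma=\phi_{e_1}\circ\cdots\circ\phi_{e_n}$, $\delta_\sigma=r_{e_1}\cdots r_{e_n}$. $V_1^{(n)}=\{k/2^n\}_{k=0}^{2^n}$; the wires $\{\phi_\sigma(0),\phi_\sigma(1)\}$, $\sigma\in E_1^{(n)}$, are all pairs of distinct points of $V_1^{(n)}$, each with a unique path $\sigma^{(n)}_{x,y}$. $U_1^{(n)}(x)=[x-2^{-n-1},x+2^{-n-1})\cap[0,1]$, $\mu_1^{(n)}(x)=|U_1^{(n)}(x)|$. Kernel $j_1^{(n)}(x,y)=(\delta_{\sigma^{(n)}_{x,y}}\mu_1^{(n)}(x)\mu_1^{(n)}(y))^{-1}$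 for $x\ne y$, $0$ for $x=y$. $\mathcal{E}_1^{(n)}(u)=\sum_{x,y\in V_1^{(n)}}(u(x)-u(y))^2j_1^{(n)}(x,y)\mu_1^{(n)}(x)\mu_1^{(n)}(y)$. Upper bound: there is $\Lambda_1>0$ with $0<j_1^{(n)}(x,y)\le\Lambda_1|x-y|^{-1-2s}$ for all $n\ge0$ and distinct $x,y\in V_1^{(n)}$. $\mathcal{E}_1^{(\infty)}(u)=\lim_n\mathcal{E}_1^{(n)}(u|_{V_1^{(n)}})$; $\operatorname{Avg}_1^{(n)}u(\bar x)=\frac1{|U_1^{(n)}(\bar x)|}\int_{U_1^{(n)}(\bar x)}u\,dx$; $\widetilde{\mathcal{E}}_1^{(\infty)}(u)=\lim_n\mathcal{E}_1^{(n)}(\operatorname{Avg}_1^{(n)}u)$. *)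

(* Defs.v *)
From Stdlib Require Import Reals Lra List ClassicalEpsilon.
From Coquelicot Require Import Coquelicot.
Import ListNotations.
Open Scope R_scope.

(* Edge types out of a vertex i of the index graph:
   Edown  = e_{i,2i-2} (exists only if i >= 2),
   Eodd   = e_{i,2i-1},  Eodd' = e'_{i,2i-1},  Eeven = e_{i,2i}. *)
Inductive etype := Edown | Eodd | Eodd' | Eeven.

Definition etarget (i : nat) (t : etype) : nat :=
  match t with
  | Edown => 2 * i - 2
  | Eodd | Eodd' => 2 * i - 1
  | Eeven => 2 * i
  end.

Definition edge_exists (i : nat) (t : etype) : Prop :=
  (1 <= i)%nat /\ (t = Edown -> (2 <= i)%nat).

Definition eshift (i : nat) (t : etype) : R :=
  match t with
  | Edown | Eodd' => / (2 * INR i)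
  | Eodd | Eeven => 0
  end.

Definition phi_e (i : nat) (t : etype) (x : R) : R :=
  INR (etarget i t) / (2 * INR i) * x + eshift i t.

Fixpoint valid_path (v : nat) (p : list etype) : Prop :=
  match p with
  | [] => True
  | t :: p' => edge_exists v t /\ valid_path (etarget v t) p'
  end.

Fixpoint phi_path (v : nat) (p : list etype) (x : R) : R :=
  match p with
  | [] => x
  | t :: p' => phi_e v t (phi_path (etarget v t) p' x)
  end.

Fixpoint delta_path (r : nat -> etype -> R) (v : nat) (p : list etype) : R :=
  match p with
  | [] => 1
  | t :: p' => r v t * delta_path r (etarget v t) p'
  end.

Definition wire_path (n : nat) (x y : R) (p : list etype) : Prop :=
  valid_path 1 p /\ length p = n /\
  ((phi_path 1 p 0 = x /\ phi_path 1 p 1 = y) \/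
   (phi_path 1 p 0 = y /\ phi_path 1 p 1 = x)).

Definition sigma_xy (n : nat) (x y : R) : list etype :=
  epsilon (inhabits []) (wire_path n x y).

(* U_1^{(n)}(x) = [x - 2^{-n-1}, x + 2^{-n-1}) /\ [0,1];  its endpoints *)
Definition hw (n : nat) : R := / 2 ^ (S n).
Definition Ulo (n : nat) (x : R) : R := Rmax (x - hw n) 0.
Definition Uhi (n : nat) (x : R) : R := Rmin (x + hw n) 1.
Definition mu (n : nat) (x : R) : R := Rmax (Uhi n x - Ulo n x) 0.

Definition jker (r : nat -> etype -> R) (n : nat) (x y : R) : R :=
  if Req_EM_T x y then 0
  else / (delta_path r 1 (sigma_xy n x y) * mu n x * mu n y).

Definition vpt (n k : nat) : R := INR k / 2 ^ n.

Definition Energy (r : nat -> etype -> R) (n : nat) (f : R -> R) : R :=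
  sum_n_m (fun k =>
    sum_n_m (fun l =>
      (f (vpt n k) - f (vpt n l)) ^ 2 * jker r n (vpt n k) (vpt n l)
        * mu n (vpt n k) * mu n (vpt n l)) 0 (2 ^ n)) 0 (2 ^ n).

Definition Avg (n : nat) (u : R -> R) (x : R) : R :=
  / mu n x * RInt u (Ulo n x) (Uhi n x).

Definition kernel_upper_bound (r : nat -> etype -> R) (s : R) : Prop :=
  exists Lam : R, 0 < Lam /\
    forall (n k l : nat), (k <= 2 ^ n)%nat -> (l <= 2 ^ n)%nat -> k <> l ->
      0 < jker r n (vpt n k) (vpt n l) /\
      jker r n (vpt n k) (vpt n l)
        <= Lam * Rpower (Rabs (vpt n k - vpt n l)) (-1 - 2 * s).

Definition Lip01 (u : R -> R) : Prop :=
  exists L : R, forall x y, 0 <= x <= 1 -> 0 <= y <= 1 ->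
    Rabs (u x - u y) <= L * Rabs (x - y).

(* Main.v *)
Require Import Defs.
From Stdlib Require Import Reals Lra Lia.
From Coquelicot Require Import Coquelicot.
Open Scope R_scope.

Lemma sumR_S (a : nat -> R) N : sum_n_m a 0 (S N) = sum_n_m a 0 N + a (S N).
Proof. rewrite sum_n_Sm; [reflexivity| lia]. Qed.

Lemma sum_diff_le (a b c : nat -> R) N :
  (forall k, (k <= N)%nat -> Rabs (a k - b k) <= c k) ->
  Rabs (sum_n_m a 0 N - sum_n_m b 0 N) <= sum_n_m c 0 N.
Proof.
  induction N as [|N IH]; intro H.
  - rewrite !sum_n_n. apply H; lia.
  - rewrite !sumR_S.
    assert (H1 := IH (fun k hk => H k ltac:(lia))).
    assert (H2 := H (S N) ltac:(lia)).
    replace (sum_n_m a 0 N + a (S N) - (sum_n_m b 0 N + b (S N)))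
      with ((sum_n_m a 0 N - sum_n_m b 0 N) + (a (S N) - b (S N))) by ring.
    eapply Rle_trans; [apply Rabs_triang|lra].
Qed.

Lemma sum_le_loc (a b : nat -> R) N :
  (forall k, (k <= N)%nat -> a k <= b k) -> sum_n_m a 0 N <= sum_n_m b 0 N.
Proof.
  induction N as [|N IH]; intro H.
  - rewrite !sum_n_n. apply H; lia.
  - rewrite !sumR_S. assert (H1 := IH (fun k hk => H k ltac:(lia))).
    assert (H2 := H (S N) ltac:(lia)). lra.
Qed.

Lemma sum_const_le (a : nat -> R) N M :
  (forall k, (k <= N)%nat -> a k <= M) -> sum_n_m a 0 N <= INR (S N) * M.
Proof.
  induction N as [|N IH]; intro H.
  - rewrite !sum_n_n. simpl. specialize (H 0%nat ltac:(lia)). lra.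
  - rewrite !sumR_S. assert (H1 := IH (fun k hk => H k ltac:(lia))).
    assert (H2 := H (S N) ltac:(lia)). rewrite (S_INR (S N)). lra.
Qed.

Lemma telescope (H : nat -> R) N :
  sum_n_m (fun l => H (S l) - H l) 0 N = H (S N) - H 0%nat.
Proof.
  induction N as [|N IH].
  - rewrite sum_n_n. reflexivity.
  - rewrite sumR_S, IH. simpl. lra.
Qed.

Definition pw (b x : R) : R := if Rle_dec x 0 then 0 else Rpower x b.

Lemma Rpower_1_base y : Rpower 1 y = 1.
Proof. unfold Rpower. rewrite ln_1, Rmult_0_r, exp_0. reflexivity. Qed.

Lemma key_step s (hs : 0 < s < 1) (d : nat) : (1 <= d)%nat ->
  Rpower (INR d) (- s) <= / (1 - s) * (pw (1 - s) (INR d) - pw (1 - s) (INR (d - 1))).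
Proof.
  intro hd. assert (hb : 0 < 1 - s) by lra.
  destruct (Nat.eq_dec d 1) as [->|hne].
  - simpl. unfold pw. destruct (Rle_dec 1 0); [lra|]. destruct (Rle_dec 0 0); [|lra].
    repeat rewrite Rpower_1_base. rewrite Rminus_0_r, Rmult_1_r.
    rewrite <- Rinv_1 at 1. apply Rinv_le_contravar; lra.
  - assert (h2 : 2 <= INR d) by (replace 2 with (INR 2) by (simpl; ring); apply le_INR; lia).
    rewrite minus_INR by lia. change (INR 1) with 1.
    unfold pw. destruct (Rle_dec (INR d) 0); [lra|]. destruct (Rle_dec (INR d - 1) 0); [lra|].
    destruct (MVT_cor2 (fun x => Rpower x (1 - s)) (fun x => (1 - s) * Rpower x (1 - s - 1))
       (INR d - 1) (INR d) ltac:(lra)) as [c [hc1 hc2]].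
    { intros c hc. apply derivable_pt_lim_power. lra. }
    rewrite hc1. replace (INR d - (INR d - 1)) with 1 by ring.
    replace (1 - s - 1) with (- s) by ring.
    rewrite Rmult_1_r. rewrite <- Rmult_assoc, Rinv_l by lra. rewrite Rmult_1_l.
    rewrite !Rpower_Ropp. apply Rinv_le_contravar.
    + unfold Rpower. apply exp_pos.
    + apply Rle_Rpower_l; lra.
Qed.

Definition wk (s : R) (k l : nat) : R :=
  if Nat.eq_dec k l then 0 else Rpower (Rabs (INR k - INR l)) (- s).

Lemma pw_nonneg b x : 0 <= pw b x.
Proof. unfold pw. destruct (Rle_dec x 0). lra. unfold Rpower. left; apply exp_pos. Qed.

Lemma pw_mono b (m N : nat) : 0 <= b -> (m <= N)%nat -> pw b (INR m) <= pw b (INR N).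
Proof.
  intros hb hm. unfold pw at 1. destruct (Rle_dec (INR m) 0). apply pw_nonneg.
  unfold pw. destruct (Rle_dec (INR N) 0).
  - exfalso. apply le_INR in hm. lra.
  - apply Rle_Rpower_l; [lra|]. split; [lra|]. apply le_INR; lia.
Qed.

Lemma row_bound s (hs : 0 < s < 1) (k N : nat) : (k <= N)%nat ->
  sum_n_m (wk s k) 0 N <= 2 / (1 - s) * pw (1 - s) (INR N).
Proof.
  intro hk. set (b := 1 - s).
  set (H := fun l : nat => / b * (if Compare_dec.le_dec l k then - pw b (INR (k - l)) else pw b (INR (l - 1 - k)))).
  assert (hstep : forall l, wk s k l <= H (S l) - H l).
  { intro l. unfold wk, H.
    destruct (Nat.eq_dec k l) as [<-|hne].
    - destruct (Compare_dec.le_dec (S k) k); [lia|]. destruct (Compare_dec.le_dec k k); [|lia].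
      replace (S k - 1 - k)%nat with 0%nat by lia. rewrite Nat.sub_diag.
      unfold pw. simpl. destruct (Rle_dec 0 0); lra.
    - destruct (Compare_dec.lt_dec l k) as [hlt|hge].
      + destruct (Compare_dec.le_dec (S l) k); [|lia]. destruct (Compare_dec.le_dec l k); [|lia].
        replace (Rabs (INR k - INR l)) with (INR (k - l)).
        2:{ rewrite minus_INR by lia. rewrite Rabs_right; [ring|]. apply Rge_minus, Rle_ge, le_INR; lia. }
        eapply Rle_trans. apply (key_step s hs (k - l)); lia.
        replace (k - l - 1)%nat with (k - S l)%nat by lia. unfold b. lra.
      + destruct (Compare_dec.le_dec (S l) k); [lia|]. destruct (Compare_dec.le_dec l k); [lia|].
        replace (Rabs (INR k - INR l)) with (INR (l - k)).
        2:{ rewrite minus_INR by lia. rewrite Rabs_left1; [ring|].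
            assert (INR k <= INR l) by (apply le_INR; lia). lra. }
        eapply Rle_trans. apply (key_step s hs (l - k)); lia.
        replace (l - k - 1)%nat with (l - 1 - k)%nat by lia.
        replace (S l - 1 - k)%nat with (l - k)%nat by lia. unfold b. lra. }
  eapply Rle_trans. apply (sum_le_loc _ (fun l => H (S l) - H l)). intros; apply hstep.
  rewrite telescope. unfold H.
  destruct (Compare_dec.le_dec (S N) k); [lia|]. destruct (Compare_dec.le_dec 0 k); [|lia].
  replace (S N - 1 - k)%nat with (N - k)%nat by lia. rewrite Nat.sub_0_r.
  assert (h1 := pw_mono b (N - k) N ltac:(unfold b; lra) ltac:(lia)).
  assert (h2 := pw_mono b k N ltac:(unfold b; lra) hk).
  assert (hb : 0 < / b) by (apply Rinv_0_lt_compat; unfold b; lra).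
  unfold Rdiv. fold b. nra.
Qed.

Lemma hw_pos n : 0 < hw n.
Proof. unfold hw. apply Rinv_0_lt_compat, pow_lt; lra. Qed.

Lemma hw_le n : hw n <= / 2.
Proof.
  unfold hw. apply Rinv_le_contravar; [lra|]. simpl.
  assert (1 <= 2 ^ n) by (apply pow_R1_Rle; lra). lra.
Qed.

Lemma hw_2 n : 2 * hw n = / 2 ^ n.
Proof. unfold hw. simpl. field. apply pow_nonzero; lra. Qed.

Lemma mu_props n x : 0 <= x <= 1 ->
  Ulo n x <= x <= Uhi n x /\ mu n x = Uhi n x - Ulo n x /\
  hw n <= mu n x <= 2 * hw n /\ 0 <= Ulo n x /\ Uhi n x <= 1 /\
  x - hw n <= Ulo n x /\ Uhi n x <= x + hw n.
Proof.
  intro hx. assert (h1 := hw_pos n). assert (h2 := hw_le n).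
  unfold mu, Ulo, Uhi, Rmax, Rmin.
  repeat destruct Rle_dec; repeat split; lra.
Qed.

Definition clamp (t : R) := Rmax 0 (Rmin t 1).

Lemma clamp_lip a b : Rabs (clamp a - clamp b) <= Rabs (a - b).
Proof. unfold clamp, Rmax, Rmin. repeat destruct Rle_dec; unfold Rabs; repeat destruct Rcase_abs; lra. Qed.

Lemma clamp_in t : 0 <= clamp t <= 1.
Proof. unfold clamp, Rmax, Rmin. repeat destruct Rle_dec; lra. Qed.

Lemma clamp_id t : 0 <= t <= 1 -> clamp t = t.
Proof. unfold clamp, Rmax, Rmin. repeat destruct Rle_dec; lra. Qed.

Lemma uc_cont (u : R -> R) L : 0 <= L ->
  (forall x y, 0 <= x <= 1 -> 0 <= y <= 1 -> Rabs (u x - u y) <= L * Rabs (x - y)) ->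
  forall z, continuous (fun t => u (clamp t)) z.
Proof.
  intros hL hu z. apply filterlim_locally. intro eps.
  assert (hd : 0 < eps / (L + 1)) by (apply Rdiv_lt_0_compat; [apply cond_pos|lra]).
  exists (mkposreal _ hd). intros y hy.
  change (Rabs (u (clamp y) - u (clamp z)) < eps).
  change (Rabs (y - z) < eps / (L + 1)) in hy.
  eapply Rle_lt_trans. apply hu; apply clamp_in.
  eapply Rle_lt_trans. apply Rmult_le_compat_l; [lra|]. apply clamp_lip.
  assert (0 < eps) by apply cond_pos.
  apply Rlt_le_trans with ((L + 1) * (eps / (L + 1))).
  - assert (0 <= Rabs (y - z)) by apply Rabs_pos. nra.
  - right. field. lra.
Qed.

Lemma avg_close (u : R -> R) L n x : 0 <= L ->
  (forall x y, 0 <= x <= 1 -> 0 <= y <= 1 -> Rabs (u x - u y) <= L * Rabs (x - y)) ->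
  0 <= x <= 1 -> Rabs (Avg n u x - u x) <= L * hw n.
Proof.
  intros hL hu hx. destruct (mu_props n x hx) as (hlx & hmu & hmb & hlo & hhi & hlo' & hhi').
  assert (hex : ex_RInt u (Ulo n x) (Uhi n x)).
  { apply (ex_RInt_ext (fun t => u (clamp t))).
    - intros t ht. rewrite Rmin_left in ht by lra. rewrite Rmax_right in ht by lra.
      rewrite clamp_id; [reflexivity|lra].
    - apply (ex_RInt_continuous (V:=R_CompleteNormedModule)). intros; apply (uc_cont u L hL hu). }
  assert (hint : Rabs (RInt (fun t => u t - u x) (Ulo n x) (Uhi n x)) <= (Uhi n x - Ulo n x) * (L * hw n)).
  { apply abs_RInt_le_const; [lra| |].
    - exact (ex_RInt_minus (V:=R_CompleteNormedModule) u (fun _ => u x) _ _ hex (ex_RInt_const _ _ _)).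
    - intros t ht. eapply Rle_trans. apply hu; lra.
      apply Rmult_le_compat_l; [lra|]. unfold Rabs; destruct Rcase_abs; lra. }
  assert (heq : RInt (fun t => u t - u x) (Ulo n x) (Uhi n x) = RInt u (Ulo n x) (Uhi n x) - (Uhi n x - Ulo n x) * u x).
  { rewrite (RInt_minus u (fun _ => u x)); [| exact hex | apply ex_RInt_const].
    rewrite RInt_const. reflexivity. }
  rewrite heq in hint. unfold Avg. rewrite hmu.
  assert (hm : 0 < Uhi n x - Ulo n x) by (assert (h := hw_pos n); lra).
  replace (/ (Uhi n x - Ulo n x) * RInt u (Ulo n x) (Uhi n x) - u x)
    with (/ (Uhi n x - Ulo n x) * (RInt u (Ulo n x) (Uhi n x) - (Uhi n x - Ulo n x) * u x)) by (field; lra).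
  rewrite Rabs_mult, Rabs_right by (left; apply Rinv_0_lt_compat; lra).
  apply Rmult_le_reg_l with (Uhi n x - Ulo n x); [lra|].
  rewrite <- Rmult_assoc, Rinv_r, Rmult_1_l by lra. exact hint.
Qed.

Lemma term_abs a b J m1 m2 d P h L Lam :
  0 <= L -> 0 < h -> h <= d -> Rabs (a - b) <= L * h -> Rabs b <= L * d ->
  0 < J -> J <= Lam * P -> 0 <= m1 <= h -> 0 <= m2 <= h ->
  Rabs ((a ^ 2 - b ^ 2) * J * m1 * m2) <= 3 * L ^ 2 * Lam * h ^ 3 * (d * P).
Proof.
  intros hL hh hd hab hb hJ hJP hm1 hm2.
  assert (hapb : Rabs (a + b) <= 3 * L * d).
  { replace (a + b) with ((a - b) + 2 * b) by ring.
    eapply Rle_trans. apply Rabs_triang. rewrite Rabs_mult, (Rabs_right 2) by lra. nra. }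
  replace ((a ^ 2 - b ^ 2) * J * m1 * m2) with (((a - b) * (a + b)) * (J * (m1 * m2))) by ring.
  rewrite Rabs_mult, Rabs_mult, (Rabs_right (J * _)) by (apply Rle_ge; apply Rmult_le_pos; [lra|nra]).
  assert (h1 : Rabs (a - b) * Rabs (a + b) <= (L * h) * (3 * L * d)).
  { apply Rmult_le_compat; auto using Rabs_pos. }
  assert (h2 : J * (m1 * m2) <= (Lam * P) * (h * h)).
  { apply Rmult_le_compat; try nra. }
  apply Rle_trans with ((L * h * (3 * L * d)) * ((Lam * P) * (h * h))).
  - apply Rmult_le_compat; [apply Rmult_le_pos; apply Rabs_pos | apply Rmult_le_pos; [lra| apply Rmult_le_pos; lra] | exact h1 | exact h2].
  - right. ring.
Qed.

Lemma sum_scal (c : R) (a : nat -> R) N : sum_n_m (fun k => c * a k) 0 N = c * sum_n_m a 0 N.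
Proof.
  induction N as [|N IH].
  - rewrite !sum_n_n. reflexivity.
  - rewrite !sumR_S, IH. simpl; ring.
Qed.

Lemma vpt_in n k : (k <= 2 ^ n)%nat -> 0 <= vpt n k <= 1.
Proof.
  intro hk. unfold vpt. assert (hp : 0 < 2 ^ n) by (apply pow_lt; lra).
  assert (INR k <= 2 ^ n).
  { replace (2 ^ n) with (INR (2 ^ n)). apply le_INR; exact hk.
    rewrite pow_INR. simpl. replace (1+1) with 2 by ring. reflexivity. }
  split. apply Rdiv_le_0_compat; [apply pos_INR|lra].
  apply Rmult_le_reg_r with (2 ^ n); [lra|]. unfold Rdiv. rewrite Rmult_assoc, Rinv_l; lra.
Qed.

Lemma vpt_diff n k l : Rabs (vpt n k - vpt n l) = Rabs (INR k - INR l) * / 2 ^ n.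
Proof.
  unfold vpt, Rdiv. assert (hp : 0 < 2 ^ n) by (apply pow_lt; lra).
  replace (INR k * / 2 ^ n - INR l * / 2 ^ n) with ((INR k - INR l) * / 2 ^ n) by ring.
  rewrite Rabs_mult, (Rabs_right (/ _)); [reflexivity|]. left; apply Rinv_0_lt_compat; lra.
Qed.

Lemma nat_diff_ge1 k l : k <> l -> 1 <= Rabs (INR k - INR l).
Proof.
  intro hne. destruct (Nat.lt_ge_cases k l) as [h|h].
  - apply le_INR in h. rewrite S_INR in h. rewrite Rabs_left1; lra.
  - assert (S l <= k)%nat by lia. apply le_INR in H. rewrite S_INR in H. rewrite Rabs_right; lra.
Qed.

Lemma Rpower_inv_base x y : 0 < x -> Rpower (/ x) y = Rpower x (- y).
Proof. intro hx. unfold Rpower. rewrite ln_Rinv by exact hx. f_equal. ring. Qed.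

Lemma Rpower_pos x y : 0 < Rpower x y.
Proof. unfold Rpower. apply exp_pos. Qed.

Lemma INR_pow2 n : INR (2 ^ n) = 2 ^ n.
Proof. rewrite pow_INR. simpl. replace (1+1) with 2 by ring. reflexivity. Qed.

Section Main.
Variables (r : nat -> etype -> R) (s : R) (hs : 0 < s < 1) (Lam : R) (hLam : 0 < Lam)
  (hJ : forall (n k l : nat), (k <= 2 ^ n)%nat -> (l <= 2 ^ n)%nat -> k <> l ->
      0 < jker r n (vpt n k) (vpt n l) /\
      jker r n (vpt n k) (vpt n l)
        <= Lam * Rpower (Rabs (vpt n k - vpt n l)) (-1 - 2 * s))
  (u : R -> R) (L : R) (hL : 0 <= L)
  (hu : forall x y, 0 <= x <= 1 -> 0 <= y <= 1 -> Rabs (u x - u y) <= L * Rabs (x - y)).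

Definition Kn (n : nat) := 3 * L ^ 2 * Lam * (/ 2 ^ n) ^ 3 * Rpower (2 ^ n) (2 * s).

Lemma term_bound n k l : (k <= 2 ^ n)%nat -> (l <= 2 ^ n)%nat ->
  Rabs ((Avg n u (vpt n k) - Avg n u (vpt n l)) ^ 2 * jker r n (vpt n k) (vpt n l)
          * mu n (vpt n k) * mu n (vpt n l)
        - (u (vpt n k) - u (vpt n l)) ^ 2 * jker r n (vpt n k) (vpt n l)
          * mu n (vpt n k) * mu n (vpt n l)) <= Kn n * wk s k l.
Proof.
  intros hk hl. unfold wk. destruct (Nat.eq_dec k l) as [<-|hne].
  - replace (_ - _) with 0 by ring. rewrite Rabs_R0. lra.
  - set (x := vpt n k). set (y := vpt n l). set (h := / 2 ^ n).
    assert (hp : 0 < 2 ^ n) by (apply pow_lt; lra).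
    assert (hh : 0 < h) by (apply Rinv_0_lt_compat; lra).
    assert (hx := vpt_in n k hk). assert (hy := vpt_in n l hl).
    assert (hd1 := nat_diff_ge1 k l hne).
    assert (hd : Rabs (x - y) = Rabs (INR k - INR l) * h) by apply vpt_diff.
    destruct (hJ n k l hk hl hne) as [hJ1 hJ2].
    destruct (mu_props n x hx) as (_ & _ & hmx & _).
    destruct (mu_props n y hy) as (_ & _ & hmy & _).
    assert (h2hw : 2 * hw n = h) by apply hw_2.
    replace (_ - _) with (((Avg n u x - Avg n u y) ^ 2 - (u x - u y) ^ 2) * jker r n x y * mu n x * mu n y) by ring.
    eapply Rle_trans.
    { apply (term_abs _ _ _ _ _ (Rabs (x - y)) (Rpower (Rabs (x - y)) (-1 - 2 * s)) h L Lam); try assumption.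
      - rewrite hd. nra.
      - replace (Avg n u x - Avg n u y - (u x - u y)) with ((Avg n u x - u x) - (Avg n u y - u y)) by ring.
        unfold Rminus at 1. eapply Rle_trans; [apply Rabs_triang|]. rewrite Rabs_Ropp.
        assert (h1 := avg_close u L n x hL hu hx). assert (h2 := avg_close u L n y hL hu hy).
        rewrite <- h2hw. lra.
      - apply hu; assumption.
      - assert (0 < hw n) by apply hw_pos. lra.
      - assert (0 < hw n) by apply hw_pos. lra. }
    assert (hdpos : 0 < Rabs (x - y)) by (rewrite hd; nra).
    assert (hdP : Rabs (x - y) * Rpower (Rabs (x - y)) (-1 - 2 * s) = Rpower (Rabs (INR k - INR l)) (- 2 * s) * Rpower (2 ^ n) (2 * s)).
    { rewrite <- (Rpower_1 (Rabs (x - y))) at 1 by exact hdpos.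
      rewrite <- Rpower_plus. replace (1 + (-1 - 2 * s)) with (- 2 * s) by ring.
      rewrite hd. rewrite <- Rpower_mult_distr by lra. unfold h. rewrite Rpower_inv_base by lra.
      f_equal. f_equal. ring. }
    rewrite hdP. unfold Kn. fold h.
    assert (hle : Rpower (Rabs (INR k - INR l)) (- 2 * s) <= Rpower (Rabs (INR k - INR l)) (- s)).
    { apply Rle_Rpower; lra. }
    assert (hq := Rpower_pos (2 ^ n) (2 * s)).
    assert (hc : 0 <= 3 * L ^ 2 * Lam * h ^ 3) by (apply Rmult_le_pos; [nra| apply pow_le; lra]).
    replace (3 * L ^ 2 * Lam * h ^ 3 * (Rpower (Rabs (INR k - INR l)) (- 2 * s) * Rpower (2 ^ n) (2 * s)))
      with ((3 * L ^ 2 * Lam * h ^ 3 * Rpower (2 ^ n) (2 * s)) * Rpower (Rabs (INR k - INR l)) (- 2 * s)) by ring.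
    apply Rmult_le_compat_l; [|exact hle]. apply Rmult_le_pos; lra.
Qed.

Lemma Kn_nonneg n : 0 <= Kn n.
Proof.
  unfold Kn. assert (hp : 0 < 2 ^ n) by (apply pow_lt; lra).
  assert (0 < / 2 ^ n) by (apply Rinv_0_lt_compat; lra).
  assert (hq := Rpower_pos (2 ^ n) (2 * s)).
  apply Rmult_le_pos; [|lra]. apply Rmult_le_pos; [nra| apply pow_le; lra].
Qed.

Definition Cst := 12 * L ^ 2 * Lam / (1 - s).
Definition qq := Rpower 2 (s - 1).

Lemma energy_diff n : Rabs (Energy r n (Avg n u) - Energy r n u) <= Cst * qq ^ n.
Proof.
  unfold Energy. set (N := (2 ^ n)%nat).
  eapply Rle_trans.
  { apply sum_diff_le with (c := fun k => sum_n_m (fun l => Kn n * wk s k l) 0 N).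
    intros k hk. apply sum_diff_le. intros l hl. apply term_bound; assumption. }
  eapply Rle_trans.
  { apply (sum_const_le _ N (Kn n * (2 / (1 - s) * pw (1 - s) (INR N)))).
    intros k hk. rewrite sum_scal. apply Rmult_le_compat_l; [apply Kn_nonneg|].
    apply row_bound; assumption. }
  assert (hX : INR N = 2 ^ n) by apply INR_pow2.
  set (X := 2 ^ n) in *.
  assert (hp : 0 < X) by (apply pow_lt; lra).
  assert (hX1 : 1 <= X) by (apply pow_R1_Rle; lra).
  unfold pw. rewrite hX. destruct (Rle_dec X 0); [lra|].
  rewrite S_INR, hX.
  assert (hqn : qq ^ n = Rpower X (s - 1)).
  { unfold qq, X. rewrite <- Rpower_pow by apply Rpower_pos.
    rewrite <- (Rpower_pow n 2) by lra. rewrite !Rpower_mult. f_equal. ring. }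
  rewrite hqn. set (Q := Rpower X (s - 1)).
  assert (hQ : Rpower X (2 * s) * Rpower X (1 - s) = Q * X ^ 2).
  { rewrite <- Rpower_plus. rewrite <- (Rpower_pow 2 X) by lra. unfold Q. rewrite <- Rpower_plus.
    f_equal. simpl. ring. }
  assert (hQpos : 0 < Q) by apply Rpower_pos.
  unfold Kn. fold X.
  replace ((X + 1) * (3 * L ^ 2 * Lam * (/ X) ^ 3 * Rpower X (2 * s) * (2 / (1 - s) * Rpower X (1 - s))))
    with (((X + 1) / X) * (6 * L ^ 2 * Lam / (1 - s) * Q)).
  2:{ assert (hQ' : Q = Rpower X (2 * s) * Rpower X (1 - s) / X ^ 2) by (rewrite hQ; field; lra).
      rewrite hQ'. field. split; lra. }
  unfold Cst.
  assert (h6 : 0 <= 6 * L ^ 2 * Lam / (1 - s) * Q).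
  { apply Rmult_le_pos; [|lra]. apply Rdiv_le_0_compat; [|lra]. nra. }
  assert (hr : (X + 1) / X <= 2).
  { apply Rmult_le_reg_r with X; [lra|]. unfold Rdiv. rewrite Rmult_assoc, Rinv_l; lra. }
  replace (12 * L ^ 2 * Lam / (1 - s) * Q) with (2 * (6 * L ^ 2 * Lam / (1 - s) * Q)) by (field; lra).
  apply Rmult_le_compat_r; assumption.
Qed.

Lemma diff_lim : is_lim_seq (fun n => Energy r n (Avg n u) - Energy r n u) 0.
Proof.
  assert (hq0 : 0 < qq) by apply Rpower_pos.
  assert (hq1 : qq < 1).
  { unfold qq. apply Rlt_le_trans with (Rpower 2 0); [apply Rpower_lt; lra| rewrite Rpower_O; lra]. }
  assert (hg : is_lim_seq (fun n => qq ^ n) 0) by (apply is_lim_seq_geom; rewrite Rabs_right; lra).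
  apply is_lim_seq_le_le with (u := fun n => (- Cst) * qq ^ n) (w := fun n => Cst * qq ^ n).
  - intro n. assert (h := energy_diff n). unfold Rabs in h. destruct Rcase_abs in h; lra.
  - replace (Finite 0) with (Rbar_mult (- Cst) 0) by (simpl; f_equal; ring).
    apply is_lim_seq_scal_l. exact hg.
  - replace (Finite 0) with (Rbar_mult Cst 0) by (simpl; f_equal; ring).
    apply is_lim_seq_scal_l. exact hg.
Qed.
End Main.

Lemma plus0 (l : Rbar) : is_Rbar_plus l 0 l.
Proof. destruct l; unfold is_Rbar_plus; simpl; try rewrite Rplus_0_r; reflexivity. Qed.

Theorem lemma4p14 (r : nat -> etype -> R) (s : R)
  (hs : 0 < s < 1)
  (hr_pos : forall i t, edge_exists i t -> 0 < r i t)
  (hr_eq : forall i, (1 <= i)%nat -> r i Eodd = r i Eodd')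
  (hub : kernel_upper_bound r s)
  (u : R -> R) (hu : Lip01 u) :
  forall l : Rbar,
    is_lim_seq (fun n => Energy r n (Avg n u)) l <->
    is_lim_seq (fun n => Energy r n u) l.
Proof.
  intro l. destruct hub as [Lam [hLam hJ]]. destruct hu as [L hL].
  assert (hL0 : 0 <= L).
  { assert (h := hL 0 1 ltac:(lra) ltac:(lra)).
    assert (0 <= Rabs (u 0 - u 1)) by apply Rabs_pos.
    replace (Rabs (0 - 1)) with 1 in h by (rewrite Rabs_left; lra). lra. }
  assert (hd := diff_lim r s hs Lam hLam hJ u L hL0 hL).
  split; intro H.
  - assert (hd' : is_lim_seq (fun n => - (Energy r n (Avg n u) - Energy r n u)) 0).
    { replace (Finite 0) with (Rbar_opp (Finite 0)) by (simpl; f_equal; ring).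
      apply (proj1 (is_lim_seq_opp _ _)). exact hd. }
    eapply is_lim_seq_ext; [|apply (is_lim_seq_plus _ _ l 0 l H hd' (plus0 l))].
    intro n. simpl. ring.
  - eapply is_lim_seq_ext; [|apply (is_lim_seq_plus _ _ l 0 l H hd (plus0 l))].
    intro n. simpl. ring.
Qed.
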